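(* Let $k$ be odd. Let $F$ be the set of the $2n$ frame positions, partitioned into the $n$ pairs $\{p,p'\}$ where $p,p'\in F$ have the same set $B(p)=B(p')=\{s\}$ and $\{p_s,p'_s\}=\{0,k-1\}$. Then for every combination $g$: $g(F)=F$; $g$ maps each pair onto a pair (so the partition of the $2n$ frame cubies into pairs is preserved, and its index $B_1$ among the $(2n)!/(2^n n!)$ partitions of $2n$ objects into pairs is invariant); and $\operatorname{sgn}(g|_F)\cdot\operatorname{sgn}(\hat g)=1$, where $\hat g$ is the permutation of the set of $n$ pairs induced by $g$ (so $B_2=\operatorname{sgn}(\sigma_c)\operatorname{sgn}(\sigma_p)$ is invariant).
   Context: Fix integers $k\ge2$, $n\ge3$, $M=\{0,\dots,k-1\}$. Positions are $p\in M^n$; $B(p)=\{i:p_i\in\{0,k-1\}\}$. For distinct $i,j$, $\psi_{i,j}:M^n\to M^n$ is $(\psi_{i,j}p)_i=k-1-p_j$, $(\psi_{i,j}p)_j=p_i$, other coordinates unchanged. A move is given by distinct $i,j$ and constants $c_l\in M$ ($l\notin\{i,j\}$): it sends each position $p$ with $p_l=c_l$ ($l\notin\{i,j\}$) to $\psi_{i,j}(p)$ and fixes the other positions; a combination is a finite sequence of moves, regarded as the composite permutation of positions. For odd $k$, the frame positions are those with exactly one coordinate in $\{0,k-1\}$ and all other coordinates equal to $(k-1)/2$. For two states of the frame, $\sigma_c$ denotes the permutation of frame cubies and $\sigma_p$ the permutation of pairs relating them. *)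

(* Defs.v *)
From mathcomp Require Import all_boot all_order all_fingroup.
Set Implicit Arguments. Unset Strict Implicit. Unset Printing Implicit Defensive.

Definition pos (n k : nat) := {ffun 'I_n -> 'I_k}.

Lemma flip_subproof k (x : 'I_k) : k.-1 - x < k.
Proof. case: x => x /=; case: k => [//|k] _ /=; by rewrite ltnS leq_subr. Qed.

Definition flip k (x : 'I_k) : 'I_k := Ordinal (flip_subproof x).

Definition bnd k (x : 'I_k) : bool := (val x == 0) || (val x == k.-1).
Definition B n k (p : pos n k) : {set 'I_n} := [set i | bnd (p i)].

Definition psi n k (i j : 'I_n) (p : pos n k) : pos n k :=
  [ffun l => if l == i then flip (p j) else if l == j then p i else p l].

(* A move: distinct i, j and constants c_l (l not in {i,j}); the values c i, c j
   are irrelevant. *)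
Definition move n k (i j : 'I_n) (c : pos n k) (p : pos n k) : pos n k :=
  if [forall l, (l != i) ==> (l != j) ==> (p l == c l)] then psi i j p else p.

Definition move_data n k := ('I_n * 'I_n * pos n k)%type.

Definition valid_move n k (m : move_data n k) : bool := m.1.1 != m.1.2.

Definition comp_moves n k (ms : seq (move_data n k)) : pos n k -> pos n k :=
  foldr (fun m f => move m.1.1 m.1.2 m.2 \o f) id ms.

Definition is_combination n k (g : {perm pos n k}) : Prop :=
  exists ms : seq (move_data n k), all (@valid_move n k) ms /\ g =1 comp_moves ms.

Definition frame n k : {set pos n k} :=
  [set p | (#|B p| == 1) && [forall i, bnd (p i) || (val (p i) == k.-1./2)]].

Definition paired n k (p q : pos n k) : bool :=
  (B p == B q) &&
  [exists s, (B p == [set s]) &&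
     (((val (p s) == 0) && (val (q s) == k.-1)) ||
      ((val (p s) == k.-1) && (val (q s) == 0)))].

Definition frame_pairs n k : {set {set pos n k}} :=
  [set [set p; q] | p in frame n k, q in frame n k & paired p q].

Definition induced n k (g : {perm pos n k}) : {perm {set pos n k}} :=
  actperm ('P^*)%act g.

(* Main.v *)
Require Import Defs.
From mathcomp Require Import all_boot all_order all_fingroup all_algebra.
From mathcomp Require Import zify.
Import GRing.Theory.

Set Implicit Arguments. Unset Strict Implicit.
Section S.
Variables (n k : nat) (Hk : 2 <= k) (Hodd : odd k).

Lemma lt0k : 0 < k. Proof. by case: k Hk. Qed.
Lemma ltpk : k.-1 < k. Proof. by case: k Hk. Qed.
Lemma ltmk : k.-1./2 < k. Proof. have := ltpk; lia. Qed.
Definition o0 : 'I_k := Ordinal lt0k.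
Definition otop : 'I_k := Ordinal ltpk.
Definition omid : 'I_k := Ordinal ltmk.

Lemma mid_dbl : k.-1./2 + k.-1./2 = k.-1.
Proof.
rewrite addnn halfK.
move: Hodd Hk; case: k => [|k'] //= ok _; by rewrite (negPf ok) subn0.
Qed.

Lemma mid_ne0 : (k.-1./2 == 0) = false.
Proof. have := mid_dbl; move: Hk; lia. Qed.
Lemma mid_netop : (k.-1./2 == k.-1) = false.
Proof. have := mid_dbl; have := mid_ne0; move: Hk; lia. Qed.
Lemma top_ne0 : (k.-1 == 0) = false.
Proof. by move: Hk; case: k => [|[|k']]. Qed.

Lemma flip0 : flip o0 = otop. Proof. apply: val_inj => /=; by rewrite subn0. Qed.
Lemma fliptop : flip otop = o0. Proof. apply: val_inj => /=; by rewrite subnn. Qed.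
Lemma flipmid : flip omid = omid.
Proof. apply: val_inj => /=; have := mid_dbl; lia. Qed.
Lemma flipK : involutive (@flip k).
Proof. move=> x; apply: val_inj => /=; have := ltn_ord x; have := ltpk; lia. Qed.


Definition fp (s : 'I_n) (b : bool) : pos n k :=
  [ffun l => if l == s then (if b then otop else o0) else omid].

Lemma B_fp s b : B (fp s b) = [set s].
Proof.
apply/setP=> l; rewrite !inE ffunE /bnd.
case: (l == s); last by rewrite /= mid_ne0 mid_netop.
by case: b => /=; rewrite ?eqxx ?orbT.
Qed.

Lemma fp_frame s b : fp s b \in frame n k.
Proof.
rewrite inE B_fp cards1 eqxx /=; apply/forallP=> l; rewrite ffunE /bnd.
case: (l == s) => /=; last by rewrite eqxx orbT.
by case: b => /=; rewrite ?eqxx ?orbT.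
Qed.

Lemma frameP p : p \in frame n k -> exists s b, p = fp s b.
Proof.
rewrite inE => /andP[/cards1P[s Bs] /forallP H].
exists s, (val (p s) == k.-1).
apply/ffunP=> l; rewrite ffunE.
have := H l; have : (l \in B p) = (l == s) by rewrite Bs inE.
rewrite inE; case: eqP => [->|_] Hb.
  move=> _; move: Hb; rewrite /bnd => /orP[/eqP h|/eqP h].
    have -> : (val (p s) == k.-1) = false by rewrite h eq_sym top_ne0.
    by apply: val_inj.
  by rewrite h eqxx; apply: val_inj.
by rewrite Hb /= => /eqP h; apply: val_inj.
Qed.

Lemma fp_inj s b t c : (fp s b == fp t c) = (s == t) && (b == c).
Proof.
apply/eqP/andP => [E|[/eqP-> /eqP->]] //.
have : B (fp s b) = B (fp t c) by rewrite E.
rewrite !B_fp => /set1_inj st; subst t; split => //.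
have := congr1 (fun p : pos n k => val (p s)) E; rewrite /= !ffunE eqxx.
move: E; case: b; case: c => //= E.
all: move: Hk; lia.
Qed.

Lemma paired_fp s b t c : paired (fp s b) (fp t c) = (s == t) && (b != c).
Proof.
rewrite /paired !B_fp.
case st: (s == t); last first.
  by apply/negbTE/negP => /andP[/eqP/set1_inj/eqP]; rewrite st.
move/eqP: st => <-; rewrite eqxx /=.
apply/existsP/idP => [[s' /andP[/eqP/set1_inj <-]]|bc].
  rewrite !ffunE eqxx; case: b; case: c => //=; move: Hk; clear; lia.
exists s; rewrite eqxx /= !ffunE eqxx.
by case: b bc; case: c => //= _; move: Hk; clear; lia.
Qed.

Definition pr (s : 'I_n) : {set pos n k} := [set fp s false; fp s true].

Lemma frame_pairsP P : (P \in frame_pairs n k) = [exists s, P == pr s].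
Proof.
apply/imset2P/existsP => [[p q pF] | [s /eqP->]].
  rewrite inE => /andP[qF pq] ->.
  case/frameP: pF pq => s [b ->]; case/frameP: qF => t [c ->].
  rewrite paired_fp => /andP[/eqP<- bc]; exists s; apply/eqP.
  by case: b bc; case: c => // _; rewrite /pr setUC.
exists (fp s false) (fp s true); rewrite ?fp_frame //.
by rewrite inE fp_frame paired_fp eqxx.
Qed.

Lemma pr_inj : injective pr.
Proof.
move=> s t E; have : fp s false \in pr t by rewrite -E !inE eqxx.
by rewrite !inE !fp_inj /= ?andbF ?andbT orbF => /eqP.
Qed.


Definition central (i j : 'I_n) (c : pos n k) :=
  [forall l, (l != i) ==> (l != j) ==> (c l == omid)].

Lemma psi_fp_out i j s b : s != i -> s != j -> psi i j (fp s b) = fp s b.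
Proof.
move=> si sj; apply/ffunP=> l; rewrite !ffunE.
have si' := si; have sj' := sj; rewrite eq_sym in si'; rewrite eq_sym in sj'.
rewrite (negbTE si') (negbTE sj').
case: (eqVneq l i) => [->|li]; first by rewrite eq_sym (negbTE si) flipmid.
case: (eqVneq l j) => [->|lj] //; by rewrite eq_sym (negbTE sj).
Qed.

Lemma psi_fp_i i j b : i != j -> psi i j (fp i b) = fp j b.
Proof.
move=> ij; apply/ffunP=> l; rewrite !ffunE eqxx (eq_sym j i) (negbTE ij).
case: (eqVneq l i) => [->|li]; first by rewrite (negbTE ij) flipmid.
by case: (l == j).
Qed.

Lemma psi_fp_j i j b : i != j -> psi i j (fp j b) = fp i (~~ b).
Proof.
move=> ij; apply/ffunP=> l; rewrite !ffunE eqxx (negbTE ij).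
case: (l == i); first by case: b; rewrite ?flip0 ?fliptop.
by case: (l == j).
Qed.

Lemma cond_fp (i j : 'I_n) (c : pos n k) (s : 'I_n) b : s \in [set i; j] ->
  [forall l, (l != i) ==> (l != j) ==> (fp s b l == c l)] = central i j c.
Proof.
move=> sij; apply: eq_forallb => l; rewrite ffunE.
case: (eqVneq l i) => //= li; case: (eqVneq l j) => //= lj.
have -> : (l == s) = false.
  by apply/negbTE; apply: contraNneq (_ : l \notin [set i; j]) => [->//|]; rewrite !inE negb_or li lj.
by rewrite eq_sym.
Qed.

Definition act (i j : 'I_n) (c : pos n k) (s : 'I_n) (b : bool) :=
  if central i j c then
    (if s == i then fp j b else if s == j then fp i (~~ b) else fp s b)
  else fp s b.

Lemma move_fp (i j : 'I_n) (c : pos n k) s b : i != j -> move i j c (fp s b) = act i j c s b.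
Proof.
move=> ij; rewrite /move /act.
case: (eqVneq s i) => [->|si].
  by rewrite cond_fp ?inE ?eqxx // psi_fp_i //; case: ifP.
case: (eqVneq s j) => [->|sj].
  by rewrite cond_fp ?inE ?eqxx ?orbT // psi_fp_j //; case: ifP.
by rewrite psi_fp_out //; case: ifP; case: ifP.
Qed.


Lemma psi_inj (i j : 'I_n) : injective (@psi n k i j).
Proof.
move=> p q E; apply/ffunP=> l.
have Ei := congr1 (fun f : pos n k => f i) E.
have Ej := congr1 (fun f : pos n k => f j) E.
have El := congr1 (fun f : pos n k => f l) E.
move: Ei Ej El; rewrite !ffunE !eqxx /=.
move=> /(congr1 (@flip k)); rewrite !flipK => Ei.
case: (eqVneq l j) => [->//|lj].
case: (eqVneq j i) => [ji|ji] Ej; first by move: lj; rewrite ji => li; rewrite (negbTE li).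
by case: (eqVneq l i) => [->|li] //.
Qed.

Lemma cond_psi (i j : 'I_n) (c p : pos n k) :
  [forall l, (l != i) ==> (l != j) ==> (psi i j p l == c l)] =
  [forall l, (l != i) ==> (l != j) ==> (p l == c l)].
Proof.
apply: eq_forallb => l; rewrite ffunE.
by case: (eqVneq l i) => //= li; case: (eqVneq l j).
Qed.

Lemma move_inj (i j : 'I_n) (c : pos n k) : injective (move i j c).
Proof.
move=> p q; rewrite /move.
case cp: [forall l, _]; case cq: [forall l, _] => //.
- exact: psi_inj.
- by move=> E; move: cq; rewrite -E cond_psi cp.
- by move=> E; move: cp; rewrite E cond_psi cq.
Qed.


Local Open Scope group_scope.
Definition mp (m : move_data n k) : {perm pos n k} := perm (@move_inj m.1.1 m.1.2 m.2).
Definition Pm (ms : seq (move_data n k)) : {perm pos n k} :=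
  foldr (fun m s => s * mp m)%g 1%g ms.

Lemma PmE ms x : Pm ms x = comp_moves ms x.
Proof. elim: ms x => [|m ms IH] x /=; first by rewrite perm1. by rewrite permM IH permE. Qed.

Lemma inN (T : finType) (S : {set T}) (a : {perm T}) :
  (forall x, x \in S -> a x \in S) -> a \in 'N(S | 'P).
Proof. by move=> H; rewrite !inE; apply/subsetP=> x xS; rewrite inE /= H. Qed.

Lemma act_frame i j c s b : act i j c s b \in frame n k.
Proof. rewrite /act; by case: ifP => _; rewrite ?fp_frame //; case: ifP => _; rewrite ?fp_frame //; case: ifP => _; rewrite fp_frame. Qed.

Lemma mp_fp (m : move_data n k) s b : valid_move m -> mp m (fp s b) = act m.1.1 m.1.2 m.2 s b.
Proof. by move=> v; rewrite permE move_fp. Qed.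

Lemma mpN m : valid_move m -> mp m \in 'N(frame n k | 'P).
Proof.
move=> v; apply: inN => x /frameP[s [b ->]]; by rewrite mp_fp // act_frame.
Qed.

Lemma inducedE (a : {perm pos n k}) X : induced a X = a @: X.
Proof. by rewrite /induced actpermE /= /setact. Qed.

Definition sact (i j : 'I_n) (c : pos n k) (s : 'I_n) :=
  if central i j c then (if s == i then j else if s == j then i else s) else s.

Lemma ind_pr m s : valid_move m ->
  induced (mp m) (pr s) = pr (sact m.1.1 m.1.2 m.2 s).
Proof.
move=> v; rewrite inducedE /pr imsetU1 imset_set1 !mp_fp // /act /sact.
case: ifP => _ //; case: ifP => _ //; case: ifP => _ //=; by rewrite setUC.
Qed.

Lemma indN m : valid_move m -> induced (mp m) \in 'N(frame_pairs n k | 'P).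
Proof.
move=> v; apply: inN => X; rewrite frame_pairsP => /existsP[s /eqP->] /=.
rewrite ind_pr // frame_pairsP; apply/existsP; by eexists.
Qed.


Lemma restr_eq (T : finType) (S : {set T}) (p q : {perm T}) :
  p \in 'N(S | 'P) -> (forall x, x \in S -> p x = q x) ->
  (forall x, x \notin S -> q x = x) -> restr_perm S p = q.
Proof.
move=> pN H1 H2; apply/permP=> x.
case: (boolP (x \in S)) => xS; first by rewrite restr_permE // H1.
by rewrite H2 // (out_perm (restr_perm_on S p)).
Qed.

Lemma tpE (T : finType) (x y z : T) :
  tperm x y z = if z == x then y else if z == y then x else z.
Proof. by rewrite permE. Qed.

Lemma notin_ne (T : finType) (S : {set T}) x y : x \in S -> y \notin S -> x != y.
Proof. by move=> xS; apply: contra => /eqP <-. Qed.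

Lemma sign_move m : valid_move m ->
  odd_perm (restr_perm (frame n k) (mp m)) =
  odd_perm (restr_perm (frame_pairs n k) (induced (mp m))).
Proof.
case: m => [[i j] c] /= ij.
case: (boolP (central i j c)) => cen; last first.
  have E1 : restr_perm (frame n k) (mp (i, j, c)) = 1.
    apply: restr_eq; first exact: mpN.
    - by move=> x /frameP[s [b ->]]; rewrite mp_fp // perm1 /act /= (negbTE cen).
    - by move=> x _; rewrite perm1.
  have E2 : restr_perm (frame_pairs n k) (induced (mp (i, j, c))) = 1.
    apply: restr_eq; first exact: indN.
    - move=> X; rewrite frame_pairsP => /existsP[s /eqP->].
      by rewrite ind_pr // perm1 /sact /= (negbTE cen).
    - by move=> x _; rewrite perm1.
  by rewrite E1 E2 !odd_perm1.
set a := fp i false; set b := fp j false; set c' := fp i true; set d := fp j true.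
have E1 : restr_perm (frame n k) (mp (i, j, c)) = tperm a b * tperm a c' * tperm a d.
  apply: restr_eq; first exact: mpN.
  - move=> x /frameP[s [bb ->]]; rewrite mp_fp // /act /= cen !permM !tpE /a /b /c' /d.
    have ij' : i != j by [].
    have ji : j != i by rewrite eq_sym.
    case: (eqVneq s i) => [->|si].
      by case: bb; do 6 rewrite ?fp_inj ?eqxx ?(negbTE ij') ?(negbTE ji) /=.
    case: (eqVneq s j) => [->|sj].
      by case: bb; do 6 rewrite ?fp_inj ?eqxx ?(negbTE ij') ?(negbTE ji) /=.
    by case: bb; do 6 rewrite ?fp_inj ?eqxx ?(negbTE si) ?(negbTE sj) /=.
  - move=> x xF; rewrite !permM !tpE.
    have ne y : y \in frame n k -> (x == y) = false.
      by move=> yF; apply/negbTE; rewrite eq_sym; apply: notin_ne yF xF.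
    have xa := ne a (fp_frame _ _); have xb := ne b (fp_frame _ _).
    have xc := ne c' (fp_frame _ _); have xd := ne d (fp_frame _ _).
    by do 4 rewrite ?xa ?xb ?xc ?xd /=.
have E2 : restr_perm (frame_pairs n k) (induced (mp (i, j, c))) = tperm (pr i) (pr j).
  apply: restr_eq; first exact: indN.
  - move=> X; rewrite frame_pairsP => /existsP[s /eqP->].
    rewrite ind_pr // tpE !(inj_eq pr_inj) /sact /= cen.
    by case: (s == i); case: (s == j).
  - have prF s : pr s \in frame_pairs n k by rewrite frame_pairsP; apply/existsP; exists s.
    move=> X XF; rewrite tpE.
    by rewrite !(eq_sym X) !(negbTE (notin_ne (prF _) XF)).
rewrite E1 E2 !odd_permM !odd_tperm /a /b /c' /d !fp_inj (inj_eq pr_inj) /=.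
by move: ij; rewrite /valid_move /= => /negbTE ->; rewrite !eqxx.
Qed.


Lemma main_Pm ms : all (@valid_move n k) ms ->
  [/\ Pm ms \in 'N(frame n k | 'P), induced (Pm ms) \in 'N(frame_pairs n k | 'P) &
   odd_perm (restr_perm (frame n k) (Pm ms)) =
   odd_perm (restr_perm (frame_pairs n k) (induced (Pm ms)))].
Proof.
elim: ms => [|m ms IH] /=.
  by move=> _; rewrite /induced !morph1 !group1 !odd_perm1.
case/andP=> v /IH[N1 N2 E].
have indM : induced (Pm ms * mp m) = induced (Pm ms) * induced (mp m).
  by rewrite /induced actpermM ?inE.
split.
- by rewrite groupM // mpN.
- by rewrite indM groupM // indN.
rewrite indM !morphM ?mpN ?indN // !odd_permM E sign_move //.
Qed.

End S.
Unset Implicit Arguments. Set Strict Implicit.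

Theorem mainTheorem9 (n k : nat) (Hk : 2 <= k) (Hn : 3 <= n) (Hodd : odd k)
  (g : {perm pos n k}) :
  is_combination g ->
  [/\ g @: frame n k = frame n k,
      (forall P, P \in frame_pairs n k -> g @: P \in frame_pairs n k) &
      ((-1) ^+ odd_perm (restr_perm (frame n k) g) *
       (-1) ^+ odd_perm (restr_perm (frame_pairs n k) (induced g)) = 1 :> int)%R].
Proof.
case=> ms [v E].
have -> : g = Pm Hk Hodd ms by apply/permP=> x; rewrite E PmE.
case: (main_Pm Hk Hodd v) => N1 N2 S.
split.
- by have := astabs_setact N1; rewrite /setact.
- move=> P PF; have := astabs_act P N2; rewrite PF.
  by move=> H; rewrite -inducedE; exact: H.
- by rewrite -signr_addb S addbb.
Qed.
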